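(* Let $q$ be a prime power, $m>2$, $n\ge1$, and let $\mathscr{C}\subseteq\mathrm{GF}(q^m)^n$ be a scalable code. Let $f:\mathrm{GF}(q^m)^n\times\mathrm{GF}(q^m)^n\to\mathrm{GF}(q^m)$ be a biadditive form and $\tilde f$ the biadditive form on $\mathrm{GF}(q)^{mn}$ induced by $f$. Suppose $\mathrm{Im}_{\mathscr{B}}(\mathscr{C})$ is self-orthogonal w.r.t. $\tilde f$ for five bases $\mathscr{B}_1,\ldots,\mathscr{B}_5$ of $\mathrm{GF}(q^m)$ over $\mathrm{GF}(q)$ whose dual bases are $\mathscr{B}_1'=\{\beta_1,\ldots,\beta_m\}$, $\mathscr{B}_2'=\{\beta_1+\alpha\beta_2,\beta_2,\ldots,\beta_m\}$, $\mathscr{B}_3'=\{\beta_1+\gamma\beta_3,\beta_2,\ldots,\beta_m\}$, $\mathscr{B}_4'=\{\beta_1,\beta_2+\delta\beta_3,\beta_3,\ldots,\beta_m\}$ and $\mathscr{B}_5'=\{\beta_1+\alpha\beta_2+\gamma\beta_3,\beta_2,\ldots,\beta_m\}$, where $\alpha,\gamma,\delta$ are nonzero (not necessarily distinct) elements of $\mathrm{GF}(q)$. Then $\mathrm{Tr}(\mathscr{C})$ is self-orthogonal w.r.t. $f$ (restricted to $\mathrm{GF}(q)^n\times\mathrm{GF}(q)^n$), and $\mathrm{Im}_{\mathscr{B}}(\mathscr{C})$ is self-orthogonal w.r.t. $\tilde f$ for every basis $\mathscr{B}$ of $\mathrm{GF}(q^m)$ over $\mathrm{GF}(q)$.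
   Context: $\mathrm{Tr}:\mathrm{GF}(q^m)\to\mathrm{GF}(q)$, $\mathrm{Tr}(a)=\sum_{i=0}^{m-1}a^{q^i}$. The dual basis of a basis $\{\gamma_1,\ldots,\gamma_m\}$ of $\mathrm{GF}(q^m)$ over $\mathrm{GF}(q)$ is the unique basis $\{\beta_1,\ldots,\beta_m\}$ with $\mathrm{Tr}(\gamma_i\beta_j)=\delta_{ij}$. A code $\mathscr{C}\subseteq\mathrm{GF}(q^m)^n$ is scalable if $x\in\mathscr{C}\Rightarrow\alpha x\in\mathscr{C}$ for all $\alpha\in\mathrm{GF}(q^m)$. A biadditive form is additive in each argument. For a basis $\mathscr{B}$ with dual basis $\{\beta_1,\ldots,\beta_m\}$, $\mathrm{Im}_{\mathscr{B}}(\mathscr{C})=\{(\mathrm{Tr}(\beta_1x_1),\ldots,\mathrm{Tr}(\beta_1x_n),\ldots,\mathrm{Tr}(\beta_mx_1),\ldots,\mathrm{Tr}(\beta_mx_n)):x\in\mathscr{C}\}\subseteq\mathrm{GF}(q)^{mn}$, and $\mathrm{Tr}(\mathscr{C})=\{(\mathrm{Tr}(x_1),\ldots,\mathrm{Tr}(x_n)):x\in\mathscr{C}\}$. The induced form is $\tilde f(x,y)=\sum_{i=0}^{m-1}f((x_{in+1},\ldots,x_{in+n}),(y_{in+1},\ldots,y_{in+n}))$ for $x,y\in\mathrm{GF}(q)^{mn}$. A code $D$ is self-orthogonal w.r.t. a form $g$ if $g(x,y)=0$ for all $x,y\in D$. *)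

(* Defs.v *)
From HB Require Import structures.
From mathcomp Require Import all_boot all_order all_algebra all_field.
Set Implicit Arguments. Unset Strict Implicit. Unset Printing Implicit Defensive.
Import GRing.Theory.
Local Open Scope ring_scope.

(* GF(q) is a finite field F (q = #|F|), GF(q^m) is a field
   extension L of F with \dim {:L} = m.  Vectors over GF(q) are represented by
   their images in L (entries of the form a%:A, a : F). *)

Section Defs.
Variables (F : finFieldType) (L : fieldExtType F).

Definition Tr (a : L) : L := \sum_(i < \dim {:L}) a ^+ (#|F| ^ i).

Definition is_basis (m : nat) (g : 'I_m -> L) : Prop :=
  basis_of fullv [seq g i | i <- enum 'I_m].

Definition is_dual_basis (m : nat) (g b : 'I_m -> L) : Prop :=
  is_basis g /\ is_basis b /\ forall i j, Tr (g i * b j) = (i == j)%:R.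

Definition scalable_code (n : nat) (C : 'rV[L]_n -> Prop) : Prop :=
  forall x, C x -> forall a : L, C (a *: x).

Definition biadditive (U : zmodType) (W : zmodType)
  (f : U -> U -> W) : Prop :=
  (forall x y z, f (x + y) z = f x z + f y z) /\
  (forall x y z, f x (y + z) = f x y + f x z).

(* Im_B(C), given the dual basis b = {beta_1..beta_m} of B: the vector whose
   coordinate i*n + j is Tr(beta_i x_j) (mxvec uses this row-major order). *)
Definition ImB (m n : nat) (b : 'I_m -> L) (C : 'rV[L]_n -> Prop)
  : 'rV[L]_(m * n) -> Prop :=
  fun v => exists x, C x /\ v = mxvec (\matrix_(i < m, j < n) Tr (b i * x 0 j)).

Definition TrC (n : nat) (C : 'rV[L]_n -> Prop) : 'rV[L]_n -> Prop :=
  fun v => exists x, C x /\ v = map_mx Tr x.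

Definition induced_form (m n : nat) (f : 'rV[L]_n -> 'rV[L]_n -> L)
  (x y : 'rV[L]_(m * n)) : L :=
  \sum_(i < m) f (row i (vec_mx x)) (row i (vec_mx y)).

Definition self_orthogonal (k : nat) (D : 'rV[L]_k -> Prop)
  (g : 'rV[L]_k -> 'rV[L]_k -> L) : Prop :=
  forall x y, D x -> D y -> g x y = 0.

(* beta_k, as a 0-based index into the family b *)
Definition bn (m : nat) (b : 'I_m -> L) (k : nat) : L :=
  nth 0 [seq b i | i <- enum 'I_m] k.

End Defs.

(* Main.v *)
Require Import Defs.
From HB Require Import structures.
From mathcomp Require Import all_boot all_order all_algebra all_field all_fingroup all_solvable.
From mathcomp Require Import ring.
Import GRing.Theory.
Local Open Scope ring_scope.

Section S.
Variables (F : finFieldType) (L : fieldExtType F).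

Lemma qnat : exists2 p, p \in [pchar L] & p.-nat #|F|.
Proof.
have [p pp pF] := finPcharP F.
exists p; first by rewrite pchar_lalg.
rewrite -cardsT; exact: abelem_pgroup (fin_ring_pchar_abelem pF).
Qed.

Lemma qnatL i : [pchar L].-nat ((#|F| ^ i)%N).
Proof.
have [p pL pq] := qnat.
by rewrite (eq_pnat _ (pcharf_eq pL)) pnatX pq.
Qed.

Lemma qnatP i : [pchar {poly L}].-nat ((#|F| ^ i)%N).
Proof.
have [p pL pq] := qnat.
have pP : p \in [pchar {poly L}] by rewrite pchar_poly.
by rewrite (eq_pnat _ (pcharf_eq pP)) pnatX pq.
Qed.

Lemma TrD x y : Tr (x + y : L) = Tr x + Tr y.
Proof.
rewrite /Tr -big_split /=; apply: eq_bigr => i _.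
by rewrite exprDn_pchar // qnatL.
Qed.

Lemma XB1q : ('X - 1 : {poly L}) ^+ #|F| = 'X^#|F| - 1.
Proof.
have := qnatP 1; rewrite expn1 => h.
by rewrite exprDn_pchar // exprNn_pchar // expr1n.
Qed.

Section Key.
Variable K : fieldType.

Definition ev (w : nat -> K) (P : {poly K}) := \sum_(i < size P) P`_i * w i.

Lemma evE w (P : {poly K}) n : (size P <= n)%N -> ev w P = \sum_(i < n) P`_i * w i.
Proof.
move=> h; rewrite /ev (big_ord_widen n (fun i => P`_i * w i) h) big_mkcond /=.
apply: eq_bigr => i _; case: ifP => // /negbT; rewrite -leqNgt => hi.
by rewrite nth_default ?mul0r.
Qed.

Lemma ev_ext w1 w2 (P : {poly K}) : (forall i, w1 i = w2 i) -> ev w1 P = ev w2 P.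
Proof. by move=> h; apply: eq_bigr => i _; rewrite h. Qed.

Lemma evB w (P Q : {poly K}) : ev w (P - Q) = ev w P - ev w Q.
Proof.
set n := maxn (size P) (size Q).
have hB : (size (P - Q)%R <= n)%N.
  by apply: leq_trans (size_polyD _ _) _; rewrite size_polyN.
rewrite (evE w _ _ hB) (evE w P n (leq_maxl _ _)) (evE w Q n (leq_maxr _ _)).
by rewrite -sumrB; apply: eq_bigr => i _; rewrite coefB mulrBl.
Qed.

Lemma evXM w (P : {poly K}) : ev w ('X * P) = ev (fun i => w i.+1) P.
Proof.
have h : (size ('X * P)%R <= (size P).+1)%N.
  by apply: leq_trans (size_polyMleq _ _) _; rewrite size_polyX.
rewrite (evE _ _ _ h) big_ord_recl coefXM /= mul0r add0r.
by apply: eq_bigr => i _; rewrite coefXM.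
Qed.

Lemma ev1 w : ev w 1 = w 0%N.
Proof.
by rewrite (evE w 1 1) ?size_poly1 // big_ord1 coef1 mul1r.
Qed.

Lemma evXn w n : ev w 'X^n = w n.
Proof.
rewrite (evE w _ n.+1) ?size_polyXn // big_ord_recr /= big1 => [|i _].
  by rewrite coefXn eqxx mul1r add0r.
by rewrite coefXn (ltn_eqF (ltn_ord i)) mul0r.
Qed.

Lemma key (Phi : K -> K -> K)
  (add2 : forall x y z, Phi x (y + z) = Phi x y + Phi x z) (s e : K) (q : nat)
  (hq : ('X - 1 : {poly K}) ^+ q = 'X^q - 1) (e0 : e != 0) (eq : e ^+ q = e)
  (sq : s ^+ q != s)
  (E4 : forall A C, Phi (s * A) C + Phi A (s * C) + Phi A C = 0)
  (E5 : forall A C, Phi (s * A) C + Phi (e * A) (e^-1 * (s * C)) = 0) :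
  forall A C, Phi A C = 0.
Proof.
have star : forall A C, Phi A C = Phi (e * A) (e^-1 * (s * C)) - Phi A (s * C).
  move=> A C.
  have -> : Phi A C = (Phi (s * A) C + Phi A (s * C) + Phi A C)
                       - (Phi (s * A) C + Phi (e * A) (e^-1 * (s * C)))
                       + Phi (e * A) (e^-1 * (s * C)) - Phi A (s * C) by ring.
  by rewrite E4 E5; ring.
pose w A C i := Phi (e ^+ i * A) ((e ^+ i)^-1 * C).
pose D j A C := ev (w A C) (('X - 1) ^+ j).
have c1 : forall j A C, Phi A C = D j A (s ^+ j * C).
  elim=> [|j IH] A C.
    by rewrite /D /w expr0 ev1 !expr0 invr1 !mul1r.
  rewrite /D [(_ - 1) ^+ j.+1]exprS mulrBl mul1r evB evXM.
  rewrite (@ev_ext _ (w (e * A) (e^-1 * (s ^+ j.+1 * C)))); last first.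
    move=> i; rewrite /w; congr (Phi _ _).
      by rewrite exprSr mulrA.
    by rewrite exprSr invfM mulrA.
  have -> : e^-1 * (s ^+ j.+1 * C) = s ^+ j * (e^-1 * (s * C)) by rewrite exprSr; ring.
  have -> : s ^+ j.+1 * C = s ^+ j * (s * C) by rewrite exprSr mulrA.
  have h1 := IH (e * A) (e^-1 * (s * C)); have h2 := IH A (s * C).
  by rewrite /D in h1 h2; rewrite -h1 -h2 -star.
have c2 : forall A C, D q A C = Phi (e * A) (e^-1 * C) - Phi A C.
  move=> A C; rewrite /D hq evB evXn ev1 /w eq expr0 invr1 !mul1r //.
pose G A C := Phi (e * A) (e^-1 * C) - Phi A C.
have Gadd : forall A x y, G A (x + y) = G A x + G A y.
  by move=> A x y; rewrite /G mulrDr !add2; ring.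
have hG : forall A C, G A (s * C) = G A (s ^+ q * C).
  move=> A C; have := c2 A (s ^+ q * C); rewrite -c1 => h.
  by rewrite /G -h -star.
have G0 : forall A C, G A C = 0.
  move=> A C.
  have hs : s ^+ q - s != 0 by rewrite subr_eq0.
  have := hG A ((s ^+ q - s)^-1 * C).
  have -> : s ^+ q * ((s ^+ q - s)^-1 * C) = C + s * ((s ^+ q - s)^-1 * C).
    by field.
  set X := (s ^+ q - s)^-1 * C; rewrite Gadd => h.
  have -> : G A C = (G A C + G A (s * X)) - G A (s * X) by ring.
  by rewrite -h subrr.
by move=> A C; rewrite star -/(G A (s * C)) G0.
Qed.
End Key.
Lemma bnE m (b : 'I_m -> L) k (hk : (k < m)%N) : bn b k = b (Ordinal hk).
Proof.
rewrite /bn (nth_map (Ordinal hk)) ?size_enum_ord //; congr b.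
by apply: val_inj; rewrite /= nth_enum_ord.
Qed.

Lemma free_prop m (b : 'I_m -> L) (hb : is_basis b) (i j : 'I_m) (c : F) :
  i != j -> b i != c *: b j.
Proof.
move=> nij; apply/negP => /eqP hij.
have /freeP hf : free [tuple b i | i < m] by exact: basis_free hb.
pose k := fun t : 'I_m => if t == i then 1 else if t == j then - c else 0.
suff : k i = 0 by rewrite /k eqxx => /eqP; rewrite oner_eq0.
apply: (hf k) => //; rewrite /k.
rewrite (bigD1 i) //= (bigD1 j) /=; last by rewrite eq_sym.
rewrite big1 => [|t /andP [nki nkj]]; last by rewrite (negPf nki) (negPf nkj) scale0r.
rewrite eqxx eq_sym (negPf nij) eqxx !nth_mktuple hij scale1r addr0.
by rewrite scaleNr addrN.
Qed.

Lemma not0 m (b : 'I_m -> L) (hb : is_basis b) (i : 'I_m) : b i != 0.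
Proof.
apply: (free_not0 (basis_free hb)); apply/mapP; exists i => //; exact: mem_enum.
Qed.

End S.

Lemma lin4 (R : comRingType) (x1 x2 x3 x5 g : R) :
  x1 = 0 -> x2 = 0 -> x3 = 0 -> x5 = 0 -> g = x5 - x2 - x3 + x1 -> g = 0.
Proof. by move=> -> -> -> -> ->; ring. Qed.

Lemma lin2 (R : comRingType) (x1 x4 g : R) :
  x1 = 0 -> x4 = 0 -> g = x4 - x1 -> g = 0.
Proof. by move=> -> -> ->; ring. Qed.

Theorem theorem5 (F : finFieldType) (L : fieldExtType F) (m n : nat)
  (hm : (2 < m)%N) (hn : (0 < n)%N) (hdim : \dim {:L} = m)
  (C : 'rV[L]_n -> Prop) (hC : scalable_code C)
  (f : 'rV[L]_n -> 'rV[L]_n -> L) (hf : biadditive f)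
  (alpha gamma delta : F)
  (ha : alpha != 0) (hg : gamma != 0) (hd : delta != 0)
  (beta : 'I_m -> L) (B1 B2 B3 B4 B5 : 'I_m -> L)
  (h1 : is_dual_basis B1 beta)
  (h2 : is_dual_basis B2 (fun i => if val i == 0%N
          then bn beta 0 + alpha%:A * bn beta 1 else beta i))
  (h3 : is_dual_basis B3 (fun i => if val i == 0%N
          then bn beta 0 + gamma%:A * bn beta 2 else beta i))
  (h4 : is_dual_basis B4 (fun i => if val i == 1%N
          then bn beta 1 + delta%:A * bn beta 2 else beta i))
  (h5 : is_dual_basis B5 (fun i => if val i == 0%N
          then bn beta 0 + alpha%:A * bn beta 1 + gamma%:A * bn beta 2
          else beta i))
  (so1 : self_orthogonal (ImB beta C) (induced_form f))
  (so2 : self_orthogonal (ImB (fun i => if val i == 0%N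
          then bn beta 0 + alpha%:A * bn beta 1 else beta i) C) (induced_form f))
  (so3 : self_orthogonal (ImB (fun i => if val i == 0%N
          then bn beta 0 + gamma%:A * bn beta 2 else beta i) C) (induced_form f))
  (so4 : self_orthogonal (ImB (fun i => if val i == 1%N
          then bn beta 1 + delta%:A * bn beta 2 else beta i) C) (induced_form f))
  (so5 : self_orthogonal (ImB (fun i => if val i == 0%N
          then bn beta 0 + alpha%:A * bn beta 1 + gamma%:A * bn beta 2
          else beta i) C) (induced_form f)) :
  self_orthogonal (TrC C) f /\
  (forall B b : 'I_m -> L, is_dual_basis B b ->
     self_orthogonal (ImB b C) (induced_form f)).
Proof.
have h1m : (1 < m)%N := ltnW hm.
have h0m : (0 < m)%N := ltnW h1m.
have hb : is_basis beta by case: h1 => _ [].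
rewrite !(@bnE _ _ _ beta _ h0m) !(@bnE _ _ _ beta _ h1m) !(@bnE _ _ _ beta _ hm) in so2 so3 so4 so5.
set P := beta (Ordinal h0m) in so2 so3 so4 so5.
set Q := beta (Ordinal h1m) in so2 so3 so4 so5.
set R := beta (Ordinal hm) in so2 so3 so4 so5.
case: hf => hfl hfr.
suff Hz : forall x y, C x -> C y ->
    forall u w, f (map_mx (@Tr _ L) (u *: x)) (map_mx (@Tr _ L) (w *: y)) = 0.
  split.
    move=> v w [x [Cx ->]] [y [Cy ->]].
    by have := Hz x y Cx Cy 1 1; rewrite !scale1r.
  move=> B b _ v w [x [Cx ->]] [y [Cy ->]].
  rewrite /induced_form !mxvecK; apply: big1 => i _.
  rewrite -(Hz x y Cx Cy (b i) (b i)); congr f; apply/rowP => j; by rewrite !mxE.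
move=> x y Cx Cy.
pose Phi u w := f (map_mx (@Tr _ L) (u *: x)) (map_mx (@Tr _ L) (w *: y)).
have trD : forall (z : 'rV[L]_n) u1 u2,
    map_mx (@Tr _ L) ((u1 + u2) *: z) = map_mx (@Tr _ L) (u1 *: z) + map_mx (@Tr _ L) (u2 *: z).
  by move=> z u1 u2; apply/matrixP => i j; rewrite !mxE mulrDl TrD.
have PhiDl : forall u1 u2 w, Phi (u1 + u2) w = Phi u1 w + Phi u2 w.
  by move=> u1 u2 w; rewrite /Phi trD hfl.
have PhiDr : forall u w1 w2, Phi u (w1 + w2) = Phi u w1 + Phi u w2.
  by move=> u w1 w2; rewrite /Phi trD hfr.
have Nz : forall b : 'I_m -> L, self_orthogonal (ImB b C) (induced_form f) ->
    forall a c, \sum_(i < m) Phi (b i * a) (b i * c) = 0.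
  move=> b so a c.
  have := so _ _ (ex_intro _ (a *: x) (conj (hC x Cx a) erefl))
                 (ex_intro _ (c *: y) (conj (hC y Cy c) erefl)).
  move=> h; rewrite -[RHS]h /induced_form !mxvecK; apply: eq_bigr => i _.
  by congr f; apply/rowP => j; rewrite !mxE mulrA.
have Nupd : forall (b : 'I_m -> L) k (hk : (k < m)%N) v a c,
    \sum_(i < m) Phi ((if val i == k then v else b i) * a)
                     ((if val i == k then v else b i) * c) =
    \sum_(i < m) Phi (b i * a) (b i * c)
      - Phi (b (Ordinal hk) * a) (b (Ordinal hk) * c) + Phi (v * a) (v * c).
  move=> b k hk v a c.
  rewrite (bigD1 (Ordinal hk)) //= eqxx [X in _ = X - _ + _](bigD1 (Ordinal hk)) //=.
  rewrite (eq_bigr (fun i => Phi (b i * a) (b i * c))); first by ring.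
  move=> i ni; rewrite ifF //; apply/negbTE; apply: contra ni => /eqP e.
  by apply/eqP/val_inj.
have e5 : forall a c, Phi (alpha%:A * Q * a) (gamma%:A * R * c)
                     + Phi (gamma%:A * R * a) (alpha%:A * Q * c) = 0.
  move=> a c.
  have e1 := Nz _ so1 a c.
  have e2 := Nz _ so2 a c; have e3 := Nz _ so3 a c; have e5 := Nz _ so5 a c.
  rewrite /= (Nupd beta 0%N h0m) -/P !mulrDl !PhiDl !PhiDr in e2.
  rewrite /= (Nupd beta 0%N h0m) -/P !mulrDl !PhiDl !PhiDr in e3.
  rewrite /= (Nupd beta 0%N h0m) -/P !mulrDl !PhiDl !PhiDr in e5.
  by apply: (@lin4 L _ _ _ _ _ e1 e2 e3 e5); ring.
have e4 : forall a c, Phi (Q * a) (delta%:A * R * c) + Phi (delta%:A * R * a) (Q * c)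
                     + Phi (delta%:A * R * a) (delta%:A * R * c) = 0.
  move=> a c.
  have e1 := Nz _ so1 a c; have e4 := Nz _ so4 a c.
  rewrite /= (Nupd beta 1%N h1m) -/Q !mulrDl !PhiDl !PhiDr in e4.
  by apply: (@lin2 L _ _ _ e1 e4); ring.
have aL0 : alpha%:A != 0 :> L by rewrite scaler_eq0 oner_eq0 orbF.
have gL0 : gamma%:A != 0 :> L by rewrite scaler_eq0 oner_eq0 orbF.
have dL0 : delta%:A != 0 :> L by rewrite scaler_eq0 oner_eq0 orbF.
have R0 : R != 0 by exact: not0.
pose s : L := Q / (delta%:A * R).
pose e : L := gamma%:A / (alpha%:A * delta%:A).
have sq : s ^+ #|F| != s.
  apply/negP => /eqP hs.
  have [c hc] : exists c : F, s = c%:A.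
    pose rs := [seq (c%:A : L) | c <- enum F].
    case: (boolP (s \in rs)) => [/mapP [c _ ->]|ns]; first by exists c.
    exfalso.
    have hsz : size ('X^#|F| - 'X : {poly L}) = #|F|.+1.
      by rewrite size_polyDl ?size_polyXn // size_polyN size_polyX ltnS finNzRing_gt1.
    have hp : ('X^#|F| - 'X : {poly L}) != 0 by rewrite -size_poly_eq0 hsz.
    have hall : all (root ('X^#|F| - 'X)) (s :: rs).
      rewrite /= rootE !hornerE hs subrr eqxx /=; apply/allP => z /mapP [c _ ->].
      by rewrite rootE !hornerE -in_algE -rmorphXn expf_card subrr.
    have hu : uniq (s :: rs).
      rewrite /= ns map_inj_uniq ?enum_uniq // => c1 c2 h.
      exact: (fmorph_inj (in_alg L) h).
    have := max_poly_roots hp hall hu.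
    by rewrite hsz /= size_map -cardE ltnn.
  have hQ : Q = (c * delta) *: R.
    have -> : Q = s * (delta%:A * R) by rewrite /s divfK // mulf_neq0.
    by rewrite hc mulrA -!in_algE -rmorphM /= mulr_algl.
  have := @free_prop F L m beta hb (Ordinal h1m) (Ordinal hm) (c * delta) isT.
  by rewrite -hQ eqxx.
move: e4 e5 sq; rewrite /s /e.
have [aa haa] : exists aa, aa = alpha%:A :> L by eexists.
have [gg hgg] : exists gg, gg = gamma%:A :> L by eexists.
have [dd hdd] : exists dd, dd = delta%:A :> L by eexists.
rewrite -haa -hgg -hdd in aL0 gL0 dL0 * => e4 e5 sq.
clear s e.
pose s : L := Q / (dd * R).
pose e : L := gg / (aa * dd).
have e0 : e != 0 by rewrite /e mulf_neq0 ?invr_eq0 ?mulf_neq0.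
have eq : e ^+ #|F| = e.
  rewrite /e haa hgg hdd -!in_algE -rmorphM -fmorphV -rmorphM -rmorphXn.
  by rewrite expf_card.
have E4 : forall u w, Phi (s * u) w + Phi u (s * w) + Phi u w = 0.
  move=> u w; have := e4 (u / (dd * R)) (w / (dd * R)).
  have -> : Q * (u / (dd * R)) = s * u by rewrite /s; ring.
  have -> : Q * (w / (dd * R)) = s * w by rewrite /s; ring.
  have -> : dd * R * (u / (dd * R)) = u by field; rewrite ?aL0 ?gL0 ?dL0 ?R0.
  by have -> : dd * R * (w / (dd * R)) = w by field; rewrite ?aL0 ?gL0 ?dL0 ?R0.
have E5 : forall u w, Phi (s * u) w + Phi (e * u) (e^-1 * (s * w)) = 0.
  move=> u w; have := e5 (u / (aa * dd * R)) (w / (gg * R)).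
  have -> : aa * Q * (u / (aa * dd * R)) = s * u by rewrite /s; field; rewrite ?aL0 ?gL0 ?dL0 ?R0.
  have -> : gg * R * (w / (gg * R)) = w by field; rewrite ?aL0 ?gL0 ?dL0 ?R0.
  have -> : gg * R * (u / (aa * dd * R)) = e * u by rewrite /e; field; rewrite ?aL0 ?gL0 ?dL0 ?R0.
  by have -> : aa * Q * (w / (gg * R)) = e^-1 * (s * w) by rewrite /e /s; field; rewrite ?aL0 ?gL0 ?dL0 ?R0.
have KK := (@key L Phi PhiDr s e #|F| (XB1q F L) e0 eq sq E4 E5).
exact: KK.
Qed.
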